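(* Let $\mathbb{C}$ be a regular category. If $\mathbb{C}$ has finite 2-fold subobject decompositions, then $\mathbb{C}$ is a majority category.
   Context: A category is regular if it has finite limits and coequalizers of kernel pairs and regular epimorphisms are pullback-stable; the image of a subobject $S$ (represented by $s$) under a morphism $f$ is the subobject represented by the mono part of a regular epi–mono factorization of $fs$. $\mathbb{C}$ has finite 2-fold subobject decompositions if for every positive integer $n$, all objects $A_1,\dots,A_n$ and all subobjects $S,T$ of $A_1\times\cdots\times A_n$: if for all $i,j\in\{1,\dots,n\}$ the images of $S$ and $T$ under $(\pi_i,\pi_j):A_1\times\cdots\times A_n\to A_i\times A_j$ coincide, then $S=T$. For $w:S\to W$ and subobject $A$ of $W$, $w\in_S A$ means $w$ factors through a representative of $A$. A ternary relation $R\leqslant X\times Y\times Z$ is majority-selecting if for all $S$ and $x,x':S\to X$, $y,y':S\to Y$, $z,z':S\to Z$: $(x,y,z')\in_S R$, $(x,y',z)\in_S R$, $(x',y,z)\in_S R$ imply $(x,y,z)\in_S R$; $\mathbb{C}$ is a majority category if every ternary relation in it is majority-selecting. *)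

(* Defs.v *)
From mathcomp Require Import all_boot.
Unset Implicit Arguments.
Unset Strict Implicit.
Unset Printing Implicit Defensive.

Record Cat := {
  Ob :> Type;
  Hom : Ob -> Ob -> Type;
  idm : forall A, Hom A A;
  comp : forall A B C, Hom B C -> Hom A B -> Hom A C;
  comp_assoc : forall A B C D (h : Hom C D) (g : Hom B C) (f : Hom A B),
      comp _ _ _ h (comp _ _ _ g f) = comp _ _ _ (comp _ _ _ h g) f;
  comp_id_l : forall A B (f : Hom A B), comp _ _ _ (idm B) f = f;
  comp_id_r : forall A B (f : Hom A B), comp _ _ _ f (idm A) = f
}.
Arguments Hom {c} _ _.
Arguments idm {c} _.
Arguments comp {c A B C} _ _.

Section Defs.
Variable C : Cat.

Definition mono {A B : C} (m : Hom A B) : Prop :=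
  forall X (g h : Hom X A), comp m g = comp m h -> g = h.

Definition is_terminal (T : C) : Prop :=
  forall X : C, exists h : Hom X T, forall h' : Hom X T, h' = h.

Record BinProd (A B : C) := {
  bp_ob : C;
  bp_p1 : Hom bp_ob A;
  bp_p2 : Hom bp_ob B;
  bp_pair : forall X, Hom X A -> Hom X B -> Hom X bp_ob;
  bp_beta1 : forall X f g, comp bp_p1 (bp_pair X f g) = f;
  bp_beta2 : forall X f g, comp bp_p2 (bp_pair X f g) = g;
  bp_uniq : forall X f g (h : Hom X bp_ob),
      comp bp_p1 h = f -> comp bp_p2 h = g -> h = bp_pair X f g
}.

Arguments bp_ob {A B} _.
Arguments bp_p1 {A B} _.
Arguments bp_p2 {A B} _.
Arguments bp_pair {A B} _ _ _ _.

Definition is_equalizer {A B E : C} (f g : Hom A B) (e : Hom E A) : Prop :=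
  comp f e = comp g e /\
  forall X (h : Hom X A), comp f h = comp g h ->
    exists k : Hom X E, comp e k = h /\ forall k', comp e k' = h -> k' = k.

Definition has_finite_limits : Prop :=
  (exists T : C, is_terminal T) /\
  (forall A B : C, inhabited (BinProd A B)) /\
  (forall (A B : C) (f g : Hom A B), exists (E : C) (e : Hom E A), is_equalizer f g e).

Definition is_pullback {A B D P : C} (f : Hom A D) (g : Hom B D)
  (p : Hom P A) (q : Hom P B) : Prop :=
  comp f p = comp g q /\
  forall X (x : Hom X A) (y : Hom X B), comp f x = comp g y ->
    exists k : Hom X P, (comp p k = x /\ comp q k = y) /\
      forall k', comp p k' = x -> comp q k' = y -> k' = k.

Definition is_kernel_pair {A B K : C} (f : Hom A B) (p1 p2 : Hom K A) : Prop :=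
  is_pullback f f p1 p2.

Definition is_coequalizer {A B Q : C} (f g : Hom A B) (c : Hom B Q) : Prop :=
  comp c f = comp c g /\
  forall X (h : Hom B X), comp h f = comp h g ->
    exists k : Hom Q X, comp k c = h /\ forall k', comp k' c = h -> k' = k.

Definition regular_epi {B Q : C} (e : Hom B Q) : Prop :=
  exists (A : C) (f g : Hom A B), is_coequalizer f g e.

Definition is_regular : Prop :=
  has_finite_limits /\
  (forall (A B K : C) (f : Hom A B) (p1 p2 : Hom K A),
      is_kernel_pair f p1 p2 -> exists (Q : C) (c : Hom A Q), is_coequalizer p1 p2 c) /\
  (forall (A B D P : C) (e : Hom A D) (g : Hom B D) (p : Hom P A) (q : Hom P B),
      regular_epi e -> is_pullback e g p q -> regular_epi q).

Definition same_sub {A S T : C} (s : Hom S A) (t : Hom T A) : Prop :=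
  (exists h : Hom S T, comp t h = s) /\ (exists k : Hom T S, comp s k = t).

Definition image_rep {S A B I : C} (f : Hom A B) (s : Hom S A) (m : Hom I B) : Prop :=
  mono m /\ exists e : Hom S I, regular_epi e /\ comp f s = comp m e.

Definition same_image {S T A B : C} (f : Hom A B) (s : Hom S A) (t : Hom T A) : Prop :=
  exists (I J : C) (m : Hom I B) (n : Hom J B),
    image_rep f s m /\ image_rep f t n /\ same_sub m n.

Record ProdCone (n : nat) (A : 'I_n -> C) := {
  pc_ob : C;
  pc_proj : forall i, Hom pc_ob (A i);
  pc_tuple : forall X, (forall i, Hom X (A i)) -> Hom X pc_ob;
  pc_beta : forall X f i, comp (pc_proj i) (pc_tuple X f) = f i;
  pc_uniq : forall X f (h : Hom X pc_ob),
      (forall i, comp (pc_proj i) h = f i) -> h = pc_tuple X f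
}.

Arguments pc_ob {n A} _.
Arguments pc_proj {n A} _ _.
Arguments pc_tuple {n A} _ _ _.

Definition finite_2fold_subobject_decompositions : Prop :=
  forall (n : nat), 0 < n ->
  forall (A : 'I_n -> C) (P : ProdCone n A) (S T : C)
         (s : Hom S (pc_ob P)) (t : Hom T (pc_ob P)),
    mono s -> mono t ->
    (forall (i j : 'I_n) (Q : BinProd (A i) (A j)),
        same_image (bp_pair Q _ (pc_proj P i) (pc_proj P j)) s t) ->
    same_sub s t.

Record TerProd (X Y Z : C) := {
  tp_ob : C;
  tp_p1 : Hom tp_ob X;
  tp_p2 : Hom tp_ob Y;
  tp_p3 : Hom tp_ob Z;
  tp_tuple : forall S, Hom S X -> Hom S Y -> Hom S Z -> Hom S tp_ob;
  tp_beta1 : forall S x y z, comp tp_p1 (tp_tuple S x y z) = x;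
  tp_beta2 : forall S x y z, comp tp_p2 (tp_tuple S x y z) = y;
  tp_beta3 : forall S x y z, comp tp_p3 (tp_tuple S x y z) = z;
  tp_uniq : forall S x y z (h : Hom S tp_ob),
      comp tp_p1 h = x -> comp tp_p2 h = y -> comp tp_p3 h = z -> h = tp_tuple S x y z
}.

Arguments tp_ob {X Y Z} _.
Arguments tp_tuple {X Y Z} _ _ _ _ _.

Definition gen_mem {S W R : C} (w : Hom S W) (a : Hom R W) : Prop :=
  exists h : Hom S R, comp a h = w.

Definition majority_selecting {X Y Z R : C} (P : TerProd X Y Z) (r : Hom R (tp_ob P)) : Prop :=
  forall (S : C) (x x' : Hom S X) (y y' : Hom S Y) (z z' : Hom S Z),
    gen_mem (tp_tuple P S x y z') r ->
    gen_mem (tp_tuple P S x y' z) r ->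
    gen_mem (tp_tuple P S x' y z) r ->
    gen_mem (tp_tuple P S x y z) r.

Definition majority_category : Prop :=
  forall (X Y Z : C) (P : TerProd X Y Z) (R : C) (r : Hom R (tp_ob P)),
    mono r -> majority_selecting P r.

End Defs.

(* Main.v *)
Require Import Defs.
From mathcomp Require Import all_boot.
Set Warnings "-notation-overridden".
Local Notation comp := Defs.comp.

Section Gen.
Variable C : Cat.

Lemma assocE {A B D E : C} (h : Hom D E) (g : Hom B D) (f : Hom A B) :
  comp h (comp g f) = comp (comp h g) f.
Proof. exact: comp_assoc. Qed.

Lemma ext_r {A B B' D : C} {a : Hom B D} {b : Hom A B} {c : Hom B' D} {d : Hom A B'} :
  comp a b = comp c d -> forall W (k : Hom W A), comp a (comp b k) = comp c (comp d k).
Proof. by move=> H W k; rewrite !assocE H. Qed.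

Lemma regepi_epi {B Q : C} (e : Hom B Q) : regular_epi C e ->
  forall X (u v : Hom Q X), comp u e = comp v e -> u = v.
Proof.
move=> [A [f [g [Hc Hu]]]] X u v Huv.
have [k [_ Hk]] := Hu X (comp u e) ltac:(by rewrite -!assocE Hc).
by rewrite (Hk u erefl) (Hk v (esym Huv)).
Qed.

Lemma fill {S I J B : C} (e : Hom S I) (m : Hom J B) (u : Hom I B) (v : Hom S J) :
  regular_epi C e -> mono C m -> comp u e = comp m v ->
  exists d, comp m d = u /\ comp d e = v.
Proof.
move=> He Hm Huv; have He' := @regepi_epi _ _ e He.
case: He => [A [f [g [Hc Hu]]]].
have Hv : comp v f = comp v g.
  by apply: Hm; rewrite !assocE -Huv -!assocE Hc.
have [d [Hd _]] := Hu J v Hv.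
exists d; split => //.
by apply: He'; rewrite -assocE Hd.
Qed.

Lemma pb_exists : has_finite_limits C -> forall (A B D : C) (f : Hom A D) (g : Hom B D),
  exists P (p : Hom P A) (q : Hom P B), is_pullback C f g p q.
Proof.
move=> [_ [Hprod Heq]] A B D f g.
case: (Hprod A B) => Q.
have [E [e [He1 He2]]] := Heq _ _ (comp f (bp_p1 C _ _ Q)) (comp g (bp_p2 C _ _ Q)).
exists E, (comp (bp_p1 C _ _ Q) e), (comp (bp_p2 C _ _ Q) e); split.
  by rewrite !assocE.
move=> X x y Hxy.
have [k [Hk Hu]] := He2 X (bp_pair C _ _ Q X x y)
  ltac:(by rewrite -!assocE bp_beta1 bp_beta2).
exists k; split.
  by rewrite -!assocE Hk bp_beta1 bp_beta2.
move=> k' H1 H2; apply: Hu.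
by apply: bp_uniq; rewrite assocE.
Qed.

Lemma image_exists : is_regular C -> forall (A B : C) (h : Hom A B),
  exists I (m : Hom I B) (e : Hom A I), mono C m /\ regular_epi C e /\ comp m e = h.
Proof.
move=> [HL [Hk Hst]] A B h.
have [K [p1 [p2 Hkp]]] := pb_exists HL _ _ _ h h.
have [I [e [Hce Hcu]]] := Hk _ _ _ h p1 p2 Hkp.
have [m [Hme _]] := Hcu B h (proj1 Hkp).
have He : regular_epi C e by exists K, p1, p2.
exists I, m, e; split => //.
move=> X a b Hab.
have [Kp [u [v Hpb]]] := pb_exists HL _ _ _ m m.
suff Euv : u = v.
  have [k [[Hka Hkb] _]] := proj2 Hpb X a b Hab.
  by rewrite -Hka -Hkb Euv.
have [L [l1 [l2 HL1]]] := pb_exists HL _ _ _ e u.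
have Hl2 : regular_epi C l2 := Hst _ _ _ _ e u l1 l2 He HL1.
have [M [m1 [m2 HM]]] := pb_exists HL _ _ _ e (comp v l2).
have Hm2 : regular_epi C m2 := Hst _ _ _ _ e _ m1 m2 He HM.
have Hf : comp h (comp l1 m2) = comp h m1.
  rewrite -Hme -!assocE (ext_r (proj1 HL1)) !assocE (proj1 Hpb) -!assocE.
  by rewrite [comp v (comp l2 m2)]assocE -(proj1 HM).
have [g [[Hg1 Hg2] _]] := proj2 Hkp M _ _ Hf.
apply: (regepi_epi _ Hl2); apply: (regepi_epi _ Hm2).
by rewrite -(proj1 HL1) -assocE -Hg1 assocE Hce -assocE Hg2 (proj1 HM).
Qed.

Lemma pb_mono_sub : has_finite_limits C -> forall (V J B : C) (n : Hom J B) (h : Hom V B),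
  mono C n -> exists U (q : Hom U V), mono C q /\ (exists k, comp h q = comp n k) /\
  (forall W (t : Hom W V) k, comp h t = comp n k -> exists t', comp q t' = t).
Proof.
move=> HL V J B n h Hn.
have [P [p [p' [Hpp Hu]]]] := pb_exists HL _ _ _ h n.
exists P, p; split; last split.
- move=> X a b Hab.
  have Hb : comp p' a = comp p' b.
    by apply: Hn; rewrite !assocE -Hpp -!assocE Hab.
  have [k [_ Hk]] := Hu X (comp p a) (comp p' a) ltac:(by rewrite !assocE Hpp).
  by rewrite (Hk a erefl erefl) (Hk b (esym Hab) (esym Hb)).
- by exists p'.
- move=> W t k Htk.
  have [t' [[H1 _] _]] := Hu W t k Htk.
  by exists t'.
Qed.


Lemma pair_comp {A B W V : C} (Q : BinProd C A B) (a : Hom W A) (b : Hom W B) (k : Hom V W) :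
  comp (bp_pair C A B Q W a b) k = bp_pair C A B Q V (comp a k) (comp b k).
Proof. by apply: bp_uniq; rewrite assocE ?bp_beta1 ?bp_beta2. Qed.

Section Main.
Variables (X Y Z : C) (TP : TerProd C X Y Z).
Local Notation P := (tp_ob C X Y Z TP).

Definition A3' (k : nat) : C := match k with 0 => X | 1 => Y | _ => Z end.
Definition A3 (i : 'I_3) : C := A3' (nat_of_ord i).
Definition pr3 (i : 'I_3) : Hom P (A3 i) :=
  match i as i0 return Hom P (A3 i0) with
  | Ordinal m _ => match m as m0 return Hom P (A3' m0) with
                   | 0 => tp_p1 C X Y Z TP | 1 => tp_p2 C X Y Z TP | _ => tp_p3 C X Y Z TP end
  end.
Definition i0 : 'I_3 := @Ordinal 3 0 isT.
Definition i1 : 'I_3 := @Ordinal 3 1 isT.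
Definition i2 : 'I_3 := @Ordinal 3 2 isT.
Definition tup3 W (f : forall i, Hom W (A3 i)) : Hom W P :=
  tp_tuple C X Y Z TP W (f i0) (f i1) (f i2).

Lemma beta3 W f i : comp (pr3 i) (tup3 W f) = f i.
Proof.
case: i => [[|[|[|m]]] Hm] //=; rewrite /tup3 ?tp_beta1 ?tp_beta2 ?tp_beta3.
- by rewrite (bool_irrelevance Hm isT).
- by rewrite (bool_irrelevance Hm isT).
- by rewrite (bool_irrelevance Hm isT).
Qed.

Lemma uniq3 W (f : forall i, Hom W (A3 i)) h : (forall i, comp (pr3 i) h = f i) -> h = tup3 W f.
Proof. move=> H; apply: tp_uniq; [exact: (H i0)|exact: (H i1)|exact: (H i2)]. Qed.

Definition PC : ProdCone C 3 A3 := Build_ProdCone C 3 A3 P pr3 tup3 beta3 uniq3.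

Variables (HR : is_regular C) (R : C) (r : Hom R P) (Rh : C) (rh : Hom Rh P).

Definition Cov {B} (f : Hom P B) := forall I (m : Hom I B) (e : Hom R I),
  mono C m -> regular_epi C e -> comp m e = comp f r -> exists c, comp f rh = comp m c.

Definition Good {B} (g : Hom P B) := exists I (n : Hom I B) (e : Hom R I) k,
  mono C n /\ regular_epi C e /\ comp n e = comp g r /\ comp g rh = comp n k.

Lemma Cov_eq {B B'} (g : Hom P B) (phi : Hom B B') (f : Hom P B') :
  Good g -> f = comp phi g -> Cov f.
Proof.
move=> [J [n [e [k [Hn [He [Hne Hk]]]]]]] -> I m e0 Hm He0 Heq.
have [d [Hd _]] := fill e m (comp phi n) e0 He Hm
  ltac:(by rewrite -assocE Hne assocE Heq).
by exists (comp d k); rewrite -assocE Hk assocE assocE Hd.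
Qed.

Lemma same_image_of t {B} (f : Hom P B) : comp rh t = r -> Cov f -> same_image C f r rh.
Proof.
move=> Ht Hc.
have [I [m [e [Hm [He Hme]]]]] := image_exists HR _ _ (comp f r).
have [J [n [e' [Hn [He' Hne]]]]] := image_exists HR _ _ (comp f rh).
exists I, J, m, n; split; [|split].
- by split => //; exists e.
- by split => //; exists e'.
split.
- have [d [Hd _]] := fill e n m (comp e' t) He Hn
    ltac:(by rewrite Hme -Ht assocE -Hne -assocE).
  by exists d.
- have [c Hcf] := Hc I m e Hm He Hme.
  have [d [Hd _]] := fill e' m n c He' Hm ltac:(by rewrite Hne).
  by exists d.
Qed.


Ltac tryG Q Qab G := first
 [ apply: (Cov_eq _ (bp_pair C _ _ Q _ (bp_p1 C _ _ Qab) (bp_p1 C _ _ Qab)) _ G);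
   by rewrite pair_comp ?bp_beta1 ?bp_beta2
 | apply: (Cov_eq _ (bp_pair C _ _ Q _ (bp_p1 C _ _ Qab) (bp_p2 C _ _ Qab)) _ G);
   by rewrite pair_comp ?bp_beta1 ?bp_beta2
 | apply: (Cov_eq _ (bp_pair C _ _ Q _ (bp_p2 C _ _ Qab) (bp_p1 C _ _ Qab)) _ G);
   by rewrite pair_comp ?bp_beta1 ?bp_beta2
 | apply: (Cov_eq _ (bp_pair C _ _ Q _ (bp_p2 C _ _ Qab) (bp_p2 C _ _ Qab)) _ G);
   by rewrite pair_comp ?bp_beta1 ?bp_beta2 ].

Lemma cov_all (Q01 : BinProd C X Y) (Q02 : BinProd C X Z) (Q12 : BinProd C Y Z) :
  Good (bp_pair C _ _ Q01 _ (tp_p1 C X Y Z TP) (tp_p2 C X Y Z TP)) ->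
  Good (bp_pair C _ _ Q02 _ (tp_p1 C X Y Z TP) (tp_p3 C X Y Z TP)) ->
  Good (bp_pair C _ _ Q12 _ (tp_p2 C X Y Z TP) (tp_p3 C X Y Z TP)) ->
  forall i j (Q : BinProd C (A3 i) (A3 j)), Cov (bp_pair C _ _ Q _ (pr3 i) (pr3 j)).
Proof.
move=> G01 G02 G12 [[|[|[|?]]] Hi] [[|[|[|?]]] Hj] Q //;
  first [tryG Q Q01 G01 | tryG Q Q02 G02 | tryG Q Q12 G12].
Qed.

End Main.

Lemma construct (X Y Z : C) (TP : TerProd C X Y Z) : has_finite_limits C ->
  forall {B1 B2 B3 I1 I2 I3 : C} (g1 : Hom (tp_ob C X Y Z TP) B1) (g2 : Hom (tp_ob C X Y Z TP) B2)
    (g3 : Hom (tp_ob C X Y Z TP) B3) (n1 : Hom I1 B1) (n2 : Hom I2 B2) (n3 : Hom I3 B3),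
  mono C n1 -> mono C n2 -> mono C n3 ->
  exists Rh (rh : Hom Rh (tp_ob C X Y Z TP)), mono C rh /\
    (exists k, comp g1 rh = comp n1 k) /\ (exists k, comp g2 rh = comp n2 k) /\
    (exists k, comp g3 rh = comp n3 k) /\
    (forall W (w : Hom W (tp_ob C X Y Z TP)), (exists c, comp g1 w = comp n1 c) ->
       (exists c, comp g2 w = comp n2 c) -> (exists c, comp g3 w = comp n3 c) ->
       exists t, comp rh t = w).
Proof.
move=> HL B1 B2 B3 I1 I2 I3 g1 g2 g3 n1 n2 n3 Hn1 Hn2 Hn3.
have [U1 [q1 [Hq1 [[k1 Hk1] Hu1]]]] := pb_mono_sub HL _ _ _ n1 g1 Hn1.
have [U2 [q2 [Hq2 [[k2 Hk2] Hu2]]]] := pb_mono_sub HL _ _ _ n2 (comp g2 q1) Hn2.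
have [U3 [q3 [Hq3 [[k3 Hk3] Hu3]]]] := pb_mono_sub HL _ _ _ n3 (comp g3 (comp q1 q2)) Hn3.
exists U3, (comp q1 (comp q2 q3)); split; [|split; [|split; [|split]]].
- move=> V a b Hab.
  apply: Hq3; apply: Hq2; apply: Hq1.
  by rewrite !assocE in Hab *.
- by exists (comp k1 (comp q2 q3)); rewrite assocE Hk1 -assocE.
- by exists (comp k2 q3); rewrite !assocE Hk2.
- by exists k3; rewrite assocE -Hk3 !assocE.
- move=> W w [c1 Hc1] [c2 Hc2] [c3 Hc3].
  have [t1 Ht1] := Hu1 W w c1 Hc1.
  have [t2 Ht2] := Hu2 W t1 c2 ltac:(by rewrite -assocE Ht1).
  have [t3 Ht3] := Hu3 W t2 c3 ltac:(by rewrite -!assocE Ht2 Ht1).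
  by exists t3; rewrite -!assocE Ht3 Ht2 Ht1.
Qed.

End Gen.

Theorem theorem4p5 (C : Cat) :
  is_regular C -> finite_2fold_subobject_decompositions C -> majority_category C.
Proof.
move=> HR H2 X Y Z TP R r Hr S x x' y y' z z' [k1 Hk1] [k2 Hk2] [k3 Hk3].
have HL := proj1 HR.
case: (proj1 (proj2 HL) X Y) => Q01.
case: (proj1 (proj2 HL) X Z) => Q02.
case: (proj1 (proj2 HL) Y Z) => Q12.
pose g1 := bp_pair C X Y Q01 _ (tp_p1 C X Y Z TP) (tp_p2 C X Y Z TP).
pose g2 := bp_pair C X Z Q02 _ (tp_p1 C X Y Z TP) (tp_p3 C X Y Z TP).
pose g3 := bp_pair C Y Z Q12 _ (tp_p2 C X Y Z TP) (tp_p3 C X Y Z TP).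
have [I1 [n1 [e1 [Hn1 [He1 Hne1]]]]] := image_exists C HR _ _ (comp g1 r).
have [I2 [n2 [e2 [Hn2 [He2 Hne2]]]]] := image_exists C HR _ _ (comp g2 r).
have [I3 [n3 [e3 [Hn3 [He3 Hne3]]]]] := image_exists C HR _ _ (comp g3 r).
have [Rh [rh [Hrh [[c1 Hc1] [[c2 Hc2] [[c3 Hc3] Hfac]]]]]] :=
  construct C X Y Z TP HL g1 g2 g3 n1 n2 n3 Hn1 Hn2 Hn3.
have [t Ht] := Hfac R r (ex_intro _ e1 (esym Hne1)) (ex_intro _ e2 (esym Hne2))
  (ex_intro _ e3 (esym Hne3)).
have G1 : Good C X Y Z TP R r Rh rh g1 by exists I1, n1, e1, c1.
have G2 : Good C X Y Z TP R r Rh rh g2 by exists I2, n2, e2, c2.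
have G3 : Good C X Y Z TP R r Rh rh g3 by exists I3, n3, e3, c3.
have Hss : same_sub C r rh.
  apply: (H2 3 isT (A3 C X Y Z) (PC C X Y Z TP) R Rh r rh Hr Hrh) => i j Q.
  apply: (same_image_of C X Y Z TP HR R r Rh rh t) => //.
  exact: (cov_all C X Y Z TP R r Rh rh Q01 Q02 Q12 G1 G2 G3 i j Q).
case: Hss => _ [k Hk].
have [t' Ht'] : exists t', comp rh t' = tp_tuple C X Y Z TP S x y z.
  apply: Hfac.
  - exists (comp e1 k1); rewrite assocE Hne1 -assocE Hk1 /g1 !pair_comp.
    by rewrite !tp_beta1 !tp_beta2.
  - exists (comp e2 k2); rewrite assocE Hne2 -assocE Hk2 /g2 !pair_comp.
    by rewrite !tp_beta1 !tp_beta3.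
  - exists (comp e3 k3); rewrite assocE Hne3 -assocE Hk3 /g3 !pair_comp.
    by rewrite !tp_beta2 !tp_beta3.
by exists (comp k t'); rewrite assocE Hk.
Qed.
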